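(* Let $f,f_0\in\mathcal F$. Let $g_0$ be a density on $\mathcal X$ with $g_0(x)\le\bar g<\infty$, and let $g$ and $u$ be densities on $\mathcal X$ with $u(x)\ge\underline u>0$ for all $x$. Then $$d_h^2(f_0,f)\le\frac{4\bar g}{\underline u}\int\Big(\sqrt{f_0(y|x)u(x)}-\sqrt{f(y|x)g(x)}\Big)^2\,dy\,dx.$$
   Context: $\mathcal Y\subset\mathbb R^{d_y}$ and $\mathcal X\subset\mathbb R^{d_x}$. $\mathcal F$ is the set of Borel measurable $f:\mathcal Y\times\mathcal X\to[0,\infty)$ with $\int f(y|x)\,dy=1$ for every $x\in\mathcal X$. For $f_1,f_2\in\mathcal F$, $d_h(f_1,f_2)=\big(\int(\sqrt{f_1(y|x)}-\sqrt{f_2(y|x)})^2g_0(x)\,dy\,dx\big)^{1/2}$. All densities are with respect to Lebesgue measure. *)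

(* Defs.v *)
From HB Require Import structures.
From mathcomp Require Import all_boot all_order all_algebra.
From mathcomp Require Import all_classical all_reals all_analysis.
Set Implicit Arguments. Unset Strict Implicit. Unset Printing Implicit Defensive.
Import Order.TTheory GRing.Theory Num.Theory.
Local Open Scope classical_set_scope.
Local Open Scope ring_scope.

(* R^n is modelled by n.-tuple R with the product (= Borel) sigma-algebra
   generated by the coordinates (instance from measurable_structure.v). *)

Definition box (R : realType) (n : nat) (a b : n.-tuple R) : set (n.-tuple R) :=
  [set t | forall i : 'I_n, tnth a i <= tnth t i <= tnth b i].

(* mu is Lebesgue measure on (the Borel sets of) R^n: it assigns to every
   box its volume.  By uniqueness of extension this characterises it. *)
Definition is_lebesgue (R : realType) (n : nat)
    (mu : {measure set (n.-tuple R) -> \bar R}) : Prop :=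
  forall a b : n.-tuple R, (forall i : 'I_n, tnth a i <= tnth b i) ->
    mu (box a b) = (\prod_(i < n) (tnth b i - tnth a i))%:E.

Definition is_density (R : realType) (n : nat)
    (nu : {measure set (n.-tuple R) -> \bar R}) (X : set (n.-tuple R))
    (g : n.-tuple R -> R) : Prop :=
  [/\ measurable_fun X g,
      (forall x, X x -> 0 <= g x) &
      (\int[nu]_(x in X) (g x)%:E = 1)%E].

(* the class F of conditional densities f(y|x) (written f y x) *)
Definition in_F (R : realType) (dy dx : nat)
    (mu : {measure set (dy.-tuple R) -> \bar R})
    (Y : set (dy.-tuple R)) (X : set (dx.-tuple R))
    (f : dy.-tuple R -> dx.-tuple R -> R) : Prop :=
  [/\ measurable_fun (Y `*` X) (fun p => f p.1 p.2),
      (forall y x, Y y -> X x -> 0 <= f y x) &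
      (forall x, X x -> \int[mu]_(y in Y) (f y x)%:E = 1)%E].

Definition dh2 (R : realType) (dy dx : nat)
    (mu : {measure set (dy.-tuple R) -> \bar R})
    (nu : {measure set (dx.-tuple R) -> \bar R})
    (Y : set (dy.-tuple R)) (X : set (dx.-tuple R))
    (g0 : dx.-tuple R -> R) (f1 f2 : dy.-tuple R -> dx.-tuple R -> R)
    : \bar R :=
  (\int[nu]_(x in X) \int[mu]_(y in Y)
     (((Num.sqrt (f1 y x) - Num.sqrt (f2 y x)) ^+ 2) * g0 x)%:E)%E.

(* Main.v *)
Require Import Defs.
From HB Require Import structures.
From mathcomp Require Import all_boot all_order all_algebra.
From mathcomp Require Import all_classical all_reals all_analysis.
From mathcomp Require Import lra measurable_realfun.
Import Order.TTheory GRing.Theory Num.Theory.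
Local Open Scope classical_set_scope.
Local Open Scope ring_scope.

Section aux.
Context d (T : measurableType d) (R : realType).
Variable mu : {measure set T -> \bar R}.
Import HBNNSimple.

Lemma le_integral_nm (D : set T) (f1 f2 : T -> \bar R) :
  (forall x, D x -> 0 <= f1 x)%E -> (forall x, D x -> f1 x <= f2 x)%E ->
  (\int[mu]_(x in D) f1 x <= \int[mu]_(x in D) f2 x)%E.
Proof.
move=> f10 f12.
have f20 : (forall x, D x -> 0 <= f2 x)%E.
  by move=> x Dx; apply: le_trans (f10 x Dx) (f12 x Dx).
rewrite !ge0_integralE//; apply: ge_ereal_sup => _ [h hle <-].
apply: ereal_sup_ubound; exists h => // y; apply: (le_trans (hle y)).
rewrite /patch; case: ifP => // /[!inE] Dy; exact: f12.
Qed.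

Lemma integralZl_le (D : set T) (f : T -> \bar R) (k : R) : 0 <= k ->
  (forall x, D x -> 0 <= f x)%E ->
  (\int[mu]_(x in D) (k%:E * f x) <= k%:E * \int[mu]_(x in D) f x)%E.
Proof.
move=> k0 f0; have [->|kn0] := eqVneq k 0.
  rewrite mul0e integral0_eq// => x _; by rewrite mul0e.
have kp : 0 < k by rewrite lt_def kn0 k0.
have kf0 : (forall x, D x -> 0 <= k%:E * f x)%E.
  by move=> x Dx; rewrite mule_ge0// ?f0// lee_fin.
rewrite !ge0_integralE//; apply: ge_ereal_sup => _ [h hle <-].
have ki0 : 0 <= k^-1 by rewrite invr_ge0.
pose h' := scale_nnsfun h ki0.
have -> : sintegral mu h = (k%:E * sintegral mu h')%E.
  have -> : sintegral mu h' = sintegral mu (cst k^-1 \* h)%R.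
    by apply: eq_sintegral.
  by rewrite sintegralrM muleA -EFinM mulfV// mul1e.
apply: lee_wpmul2l; first by rewrite lee_fin.
apply: ereal_sup_ubound; exists h' => // y.
have := hle y; rewrite /patch; case: ifP => _ hy; last first.
  change (point : \bar R) with ((0 : R)%:E) in hy |- *.
  rewrite lee_fin in hy; rewrite /h' /= lee_fin.
  by rewrite mulr_ge0_le0.
apply: (@le_trans _ _ (k^-1%:E * (k%:E * f y))%E).
  by rewrite /h' /= EFinM lee_wpmul2l// lee_fin.
by rewrite muleA -EFinM mulVf// mul1e.
Qed.


Lemma cancel_int (D : set T) (mD : measurable D) (P Q A B : T -> R) (lam : R) :
  measurable_fun D P -> measurable_fun D Q ->
  measurable_fun D A -> measurable_fun D B ->
  (forall x, D x -> 0 <= P x) -> (forall x, D x -> 0 <= Q x) ->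
  (forall x, D x -> 0 <= A x) -> (forall x, D x -> 0 <= B x) ->
  0 <= lam ->
  (\int[mu]_(x in D) (A x)%:E = 1)%E -> (\int[mu]_(x in D) (B x)%:E = 1)%E ->
  (forall x, D x -> P x + lam * A x <= Q x + lam * B x) ->
  (\int[mu]_(x in D) (P x)%:E <= \int[mu]_(x in D) (Q x)%:E)%E.
Proof.
move=> mP mQ mA mB P0 Q0 A0 B0 l0 HA HB Hpt.
have H : (\int[mu]_(x in D) (P x + lam * A x)%:E <=
          \int[mu]_(x in D) (Q x + lam * B x)%:E)%E.
  apply: ge0_le_integral => //. all: try (by move=> x Dx; rewrite lee_fin addr_ge0 ?mulr_ge0 ?P0 ?A0).
  - apply/measurable_EFinP; apply: measurable_funD => //.
    by apply: measurable_funM => //; exact: measurable_cst.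
  - apply/measurable_EFinP; apply: measurable_funD => //.
    by apply: measurable_funM => //; exact: measurable_cst.
have E (F G : T -> R) : measurable_fun D F -> measurable_fun D G ->
    (forall x, D x -> 0 <= F x) -> (forall x, D x -> 0 <= G x) ->
    (\int[mu]_(x in D) (G x)%:E = 1)%E ->
    (\int[mu]_(x in D) (F x + lam * G x)%:E =
      \int[mu]_(x in D) (F x)%:E + lam%:E)%E.
  move=> mF mG F0 G0 HG.
  under eq_integral do rewrite EFinD EFinM.
  rewrite ge0_integralD; [|exact: mD
    |by move=> x Dx; rewrite lee_fin F0
    |exact/measurable_EFinP
    |by move=> x Dx; rewrite -EFinM lee_fin mulr_ge0 ?G0
    |apply/measurable_EFinP; apply: measurable_funM => //; exact: measurable_cst].
  rewrite ge0_integralZl_EFin; [|exact: mD|by move=> x Dx; rewrite lee_fin G0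
    |exact/measurable_EFinP|exact: l0].
  by rewrite HG mule1.
by move: H; rewrite (E P A)// (E Q B)// leeD2rE.
Qed.

Lemma key (D : set T) (mD : measurable D) (a b : T -> R) (s t : R) :
  measurable_fun D a -> measurable_fun D b ->
  (forall x, D x -> 0 <= a x) -> (forall x, D x -> 0 <= b x) ->
  (\int[mu]_(x in D) (a x ^+ 2)%:E = 1)%E ->
  (\int[mu]_(x in D) (b x ^+ 2)%:E = 1)%E ->
  0 <= s -> 0 <= t ->
  ((s ^+ 2)%:E * \int[mu]_(x in D) ((a x - b x) ^+ 2)%:E <=
   4%:E * \int[mu]_(x in D) ((s * a x - t * b x) ^+ 2)%:E)%E.
Proof.
move=> ma mb a0 b0 Ha Hb s0 t0.
have mab : measurable_fun D (fun x => (a x - b x) ^+ 2).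
  by apply: measurable_funX; apply: measurable_funB.
have mst : measurable_fun D (fun x => (s * a x - t * b x) ^+ 2).
  apply: measurable_funX; apply: measurable_funB;
  by apply: measurable_funM => //; exact: measurable_cst.
have ma2 : measurable_fun D (fun x => a x ^+ 2) by exact: measurable_funX.
have mb2 : measurable_fun D (fun x => b x ^+ 2) by exact: measurable_funX.
have p1 : forall x, D x -> (0 <= ((a x - b x) ^+ 2)%:E)%E.
  by move=> x _; rewrite lee_fin sqr_ge0.
have p2 : forall x, D x -> (0 <= ((s * a x - t * b x) ^+ 2)%:E)%E.
  by move=> x _; rewrite lee_fin sqr_ge0.
rewrite -(ge0_integralZl_EFin mu mD p1 (proj2 (measurable_EFinP _ _) mab) (sqr_ge0 s)).
rewrite -(@ge0_integralZl_EFin _ _ _ mu _ mD _ p2 (proj2 (measurable_EFinP _ _) mst) 4).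
under eq_integral do rewrite -EFinM.
under [X in (_ <= X)%E]eq_integral do rewrite -EFinM.
have [l0|l0] := leP 0 (2 * t ^+ 2 - 2 * s ^+ 2).
  apply: (@cancel_int D mD _ _ (fun x => b x ^+ 2) (fun x => a x ^+ 2)
    (2 * t ^+ 2 - 2 * s ^+ 2)) => //.
  - apply: measurable_funM => //; exact: measurable_cst.
  - apply: measurable_funM => //; exact: measurable_cst.
  - by move=> x _; rewrite mulr_ge0 ?sqr_ge0.
  - by move=> x _; rewrite mulr_ge0 ?sqr_ge0.
  - by move=> x _; rewrite sqr_ge0.
  - by move=> x _; rewrite sqr_ge0.
  - move=> x Dx; have := a0 x Dx; have := b0 x Dx => hb ha.
    have h1 : 0 <= (s ^+ 2 + 2 * t ^+ 2) * (a x - b x) ^+ 2 by apply: mulr_ge0; [apply: addr_ge0; [exact: sqr_ge0|apply: mulr_ge0 => //; exact: sqr_ge0]|exact: sqr_ge0].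
    have h2 : 0 <= a x * b x * (s - t) ^+ 2 by apply: mulr_ge0; [exact: mulr_ge0|exact: sqr_ge0].
    nra.
apply: (@cancel_int D mD _ _ (fun x => a x ^+ 2) (fun x => b x ^+ 2)
    (2 * s ^+ 2 - 2 * t ^+ 2)) => //.
- apply: measurable_funM => //; exact: measurable_cst.
- apply: measurable_funM => //; exact: measurable_cst.
- by move=> x _; rewrite mulr_ge0 ?sqr_ge0.
- by move=> x _; rewrite mulr_ge0 ?sqr_ge0.
- by move=> x _; rewrite sqr_ge0.
- by move=> x _; rewrite sqr_ge0.
- lra.
- move=> x Dx; have := a0 x Dx; have := b0 x Dx => hb ha.
  have h1 : 0 <= (s ^+ 2 + 2 * t ^+ 2) * (a x - b x) ^+ 2 by apply: mulr_ge0; [apply: addr_ge0; [exact: sqr_ge0|apply: mulr_ge0 => //; exact: sqr_ge0]|exact: sqr_ge0].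
  have h2 : 0 <= a x * b x * (s - t) ^+ 2 by apply: mulr_ge0; [exact: mulr_ge0|exact: sqr_ge0].
  nra.
by [].
Qed.

End aux.

Theorem lemma1 (R : realType) (dy dx : nat)
  (mu : {measure set (dy.-tuple R) -> \bar R})
  (nu : {measure set (dx.-tuple R) -> \bar R})
  (Hmu : is_lebesgue mu) (Hnu : is_lebesgue nu)
  (Y : set (dy.-tuple R)) (X : set (dx.-tuple R))
  (mY : measurable Y) (mX : measurable X)
  (f f0 : dy.-tuple R -> dx.-tuple R -> R)
  (Hf : in_F mu Y X f) (Hf0 : in_F mu Y X f0)
  (g0 g u : dx.-tuple R -> R) (gbar ulow : R)
  (Hg0 : is_density nu X g0) (Hg0b : forall x, X x -> g0 x <= gbar)
  (Hg : is_density nu X g) (Hu : is_density nu X u)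
  (Hulow : 0 < ulow) (Hub : forall x, X x -> ulow <= u x) :
  (dh2 mu nu Y X g0 f0 f <=
   (4 * gbar / ulow)%:E *
   \int[nu]_(x in X) \int[mu]_(y in Y)
      ((Num.sqrt (f0 y x * u x) - Num.sqrt (f y x * g x)) ^+ 2)%:E)%E.
Proof.
have [gneg|gpos] := ltP gbar 0.
  have X0 : X = set0.
    apply/seteqP; split => x Xx //.
    have := Hg0b x Xx; case: Hg0 => _ g00 _; have := g00 x Xx.
    move=> h1 h2; exfalso; lra.
  by rewrite /dh2 X0 !integral_set0 mule0.
case: Hf => mf f_ge0 fint; case: Hf0 => mf0 f0_ge0 f0int.
case: Hg0 => _ g0_ge0 _; case: Hg => _ g_ge0 _; case: Hu => _ u_ge0 _.
have msec (h : dy.-tuple R -> dx.-tuple R -> R) x : X x ->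
    measurable_fun (Y `*` X) (fun p => h p.1 p.2) ->
    measurable_fun Y (fun y => h y x).
  move=> Xx mh.
  have -> : (fun y => h y x) = (fun p => h p.1 p.2) \o (pair^~ x) by [].
  apply: (measurable_comp (measurableX mY mX)) => //.
    by move=> _ [y Yy <-]; split.
  exact: measurable_funS (@pair2_measurable _ _ _ _ x).
have msqrt : measurable_fun [set: R] (@Num.sqrt R).
  exact: continuous_measurable_fun (@sqrt_continuous R).
set c := 4 * gbar / ulow.
have c0 : 0 <= c by rewrite /c mulr_ge0 ?invr_ge0 ?mulr_ge0 // ltW.
rewrite /dh2.
apply: le_trans (@integralZl_le _ _ _ nu X (fun x => \int[mu]_(y in Y)
      ((Num.sqrt (f0 y x * u x) - Num.sqrt (f y x * g x)) ^+ 2)%:E)%E c c0 _); last first.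
  by move=> x Xx; apply: integral_ge0 => y Yy; rewrite lee_fin sqr_ge0.
apply: le_integral_nm.
  move=> x Xx; apply: integral_ge0 => y Yy.
  by rewrite lee_fin mulr_ge0 ?sqr_ge0 ?g0_ge0.
move=> x Xx.
pose a := fun y => Num.sqrt (f0 y x).
pose b := fun y => Num.sqrt (f y x).
pose s := Num.sqrt (u x); pose t := Num.sqrt (g x).
have ma : measurable_fun Y a.
  exact: (measurableT_comp msqrt (msec f0 x Xx mf0)).
have mb : measurable_fun Y b.
  exact: (measurableT_comp msqrt (msec f x Xx mf)).
have Ha : (\int[mu]_(y in Y) (a y ^+ 2)%:E = 1)%E.
  rewrite -(f0int x Xx); apply: eq_integral => y /[!inE] Yy.
  by rewrite /a sqr_sqrtr // f0_ge0.
have Hb : (\int[mu]_(y in Y) (b y ^+ 2)%:E = 1)%E.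
  rewrite -(fint x Xx); apply: eq_integral => y /[!inE] Yy.
  by rewrite /b sqr_sqrtr // f_ge0.
have K := @key _ _ _ mu Y mY a b s t ma mb (fun y _ => sqrtr_ge0 _) (fun y _ => sqrtr_ge0 _)
  Ha Hb (sqrtr_ge0 (u x)) (sqrtr_ge0 (g x)).
have EJ : (\int[mu]_(y in Y)
     ((Num.sqrt (f0 y x * u x) - Num.sqrt (f y x * g x)) ^+ 2)%:E =
   \int[mu]_(y in Y) ((s * a y - t * b y) ^+ 2)%:E)%E.
  apply: eq_integral => y /[!inE] Yy.
  by rewrite !sqrtrM ?f0_ge0 ?f_ge0 // (mulrC (Num.sqrt (f0 y x))) (mulrC (Num.sqrt (f y x))).
have mab : measurable_fun Y (fun y => (a y - b y) ^+ 2).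
  by apply: measurable_funX; apply: measurable_funB.
have p1 : forall y, Y y -> (0 <= ((a y - b y) ^+ 2)%:E)%E.
  by move=> y _; rewrite lee_fin sqr_ge0.
have EI : (\int[mu]_(y in Y)
     (((Num.sqrt (f0 y x) - Num.sqrt (f y x)) ^+ 2) * g0 x)%:E =
   (g0 x)%:E * \int[mu]_(y in Y) ((a y - b y) ^+ 2)%:E)%E.
  rewrite -(ge0_integralZl_EFin mu mY p1 (proj2 (measurable_EFinP _ _) mab) (g0_ge0 x Xx)).
  by apply: eq_integral => y _; rewrite mulrC EFinM.
rewrite EI EJ.
set KK := (\int[mu]_(y in Y) ((a y - b y) ^+ 2)%:E)%E.
set JJ := (\int[mu]_(y in Y) ((s * a y - t * b y) ^+ 2)%:E)%E.
have KK0 : (0 <= KK)%E by apply: integral_ge0.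
have su : s ^+ 2 = u x by rewrite sqr_sqrtr // u_ge0.
rewrite su in K.
have ulow0 : ulow != 0 by rewrite gt_eqF.
apply: (@le_trans _ _ ((gbar)%:E * KK)%E).
  by apply: lee_wpmul2r => //; rewrite lee_fin Hg0b.
have -> : ((gbar)%:E * KK = (gbar / ulow)%:E * (ulow%:E * KK))%E.
  by rewrite muleA -EFinM mulrVK // unitfE.
apply: (@le_trans _ _ ((gbar / ulow)%:E * ((u x)%:E * KK))%E).
  apply: lee_wpmul2l; first by rewrite lee_fin divr_ge0 // ltW.
  by apply: lee_wpmul2r => //; rewrite lee_fin Hub.
apply: (@le_trans _ _ ((gbar / ulow)%:E * (4%:E * JJ))%E).
  by apply: lee_wpmul2l => //; rewrite lee_fin divr_ge0 // ltW.
by rewrite muleA -EFinM /c mulrC mulrA.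
Qed.
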